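(* Let $s\ge3$ and let $S$ be a sequence over an alphabet of $n$ symbols, written as a concatenation of $m$ blocks, containing no alternation of length $s+2$. Let $2\le\hat m<m$ and partition the blocks of $S$ into $\hat m$ consecutive intervals $S_1S_2\cdots S_{\hat m}$, where $S_q$ consists of $m_q\ge1$ blocks ($\sum_q m_q=m$). For each $q$ let $\check n_q$ be the number of symbols occurring in $S_q$ and in no other interval, and let $\hat n=n-\sum_q\check n_q$. Then \[ |S|\le \sum_{q=1}^{\hat m}\lambda_s(\check n_q,m_q)+2\lambda_{s-1}(\hat n,m)+\lambda_{s-2}\big(\lambda_s(\hat n,\hat m)-2\hat n,\,m\big). \] Consequently $\lambda_s(n,m)$ is at most the maximum of the right-hand side over all nonnegative integers $\hat n,\check n_1,\dots,\check n_{\hat m}$ summing to $n$.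
   Context: For $s\ge1$, a sequence contains an alternation of length $s+2$ if there are distinct symbols $a\ne b$ and indices $i_1<\dots<i_{s+2}$ whose entries are alternately $a,b,a,b,\dots$. A block is a sequence of pairwise distinct symbols. $\lambda_s(n,m)$ is the maximum length of a sequence using at most $n$ distinct symbols that contains no alternation of length $s+2$ and can be written as a concatenation of at most $m$ blocks; by convention $\lambda_s(0,m)=0$. *)

(* Defs.v *)
From Stdlib Require Import ClassicalEpsilon.
From mathcomp Require Import all_boot.
Set Implicit Arguments. Unset Strict Implicit. Unset Printing Implicit Defensive.

Definition alt (T : eqType) (a b : T) (k : nat) : seq T :=
  mkseq (fun i => if odd i then b else a) k.

Definition has_alt (T : eqType) (k : nat) (S : seq T) : Prop :=
  exists a b : T, a != b /\ subseq (alt a b k) S.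

Definition block_decomp (T : eqType) (S : seq T) (bs : seq (seq T)) : Prop :=
  all uniq bs /\ flatten bs = S.

(* Symbols are taken in nat (any alphabet can be relabelled into nat). *)
Definition realizable (s n m L : nat) : Prop :=
  exists S : seq nat, size S = L /\ size (undup S) <= n /\ ~ has_alt (s.+2) S /\
    exists bs : seq (seq nat), size bs <= m /\ block_decomp S bs.

Definition pbool (P : Prop) : bool :=
  if excluded_middle_informative P then true else false.

(* Every such sequence has
   length <= n*m (each block has at most n symbols), so the maximum over
   L <= n*m is the maximum over all L; L = 0 is always realizable. *)
Definition lambda (s n m : nat) : nat :=
  \max_(L < (n * m).+1 | pbool (realizable s n m L)) L.

Definition intervals (T : eqType) (bs : seq (seq T)) (ms : seq nat) : seq (seq T) :=
  map flatten (reshape ms bs).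

Definition only_in (T : eqType) (Ss : seq (seq T)) (q : nat) (x : T) : bool :=
  all (fun r => (r == q) || (x \notin nth [::] Ss r)) (iota 0 (size Ss)).

Definition checkn (T : eqType) (Ss : seq (seq T)) (q : nat) : nat :=
  count (only_in Ss q) (undup (nth [::] Ss q)).

Definition rhs (s m mhat : nat) (ms : seq nat) (nhat : nat) (cn : seq nat) : nat :=
  \sum_(q < mhat) lambda s (nth 0 cn q) (nth 0 ms q)
  + 2 * lambda s.-1 nhat m
  + lambda (s - 2) (lambda s nhat mhat - 2 * nhat) m.

(* Main.v *)
Require Import Defs.
From Stdlib Require Import ClassicalEpsilon.
From mathcomp Require Import all_boot zify.
Set Implicit Arguments. Unset Strict Implicit. Unset Printing Implicit Defensive.


Lemma altS (T : eqType) (a b : T) k : alt a b k.+1 = a :: alt b a k.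
Proof.
rewrite /alt /mkseq /= -[1]/(1 + 0) iotaDl -map_comp; congr (_ :: _).
by apply: eq_map => i /=; case: (odd i).
Qed.

Lemma alt_rcons (T : eqType) (a b : T) k :
  alt a b k.+1 = rcons (alt a b k) (if odd k then b else a).
Proof. by rewrite /alt mkseqS. Qed.

Lemma alt_map (T T' : eqType) (f : T -> T') a b k :
  map f (alt a b k) = alt (f a) (f b) k.
Proof. rewrite /alt /mkseq -map_comp; apply: eq_map => i /=; by case: odd. Qed.

Lemma mem_alt (T : eqType) (a b x : T) k : x \in alt a b k -> (x == a) || (x == b).
Proof.
elim: k a b => [|k IH] a b //=; rewrite altS inE => /orP[->//|/IH]; by rewrite orbC.
Qed.

Lemma noalt_sub (T : eqType) k (X Y : seq T) :
  subseq X Y -> ~ has_alt k Y -> ~ has_alt k X.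
Proof.
move=> sXY nY [a [b [ab s]]]; apply: nY; exists a, b; split=> //; exact: subseq_trans s sXY.
Qed.

Lemma count_sub (T : eqType) (p : pred T) s1 s2 : subseq s1 s2 -> count p s1 <= count p s2.
Proof.
move=> h; rewrite -!size_filter; apply: size_subseq.
rewrite subseq_filter filter_all /=; exact: subseq_trans (filter_subseq _ _) h.
Qed.

Lemma flatten_bound (T : eqType) (bs : seq (seq T)) N :
  (forall b, b \in bs -> size b <= N) -> size (flatten bs) <= size bs * N.
Proof.
elim: bs => //= b bs IH H; rewrite size_cat mulSn leq_add //.
  by apply: H; rewrite inE eqxx.
by apply: IH => c cin; apply: H; rewrite inE cin orbT.
Qed.

Lemma block_size (T : eqType) (S : seq T) bs :
  block_decomp S bs -> size S <= size bs * size (undup S).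
Proof.
case=> ub fS; rewrite -{1}fS; apply: flatten_bound => b bin.
apply: uniq_leq_size; first by move/allP: ub; apply.
by move=> x xb; rewrite mem_undup -fS; apply/flattenP; exists b.
Qed.

Lemma pboolE P : pbool P = true <-> P.
Proof. by rewrite /pbool; case: excluded_middle_informative. Qed.

Lemma realizable_le s n m L : realizable s n m L -> L <= lambda s n m.
Proof.
move=> hr; have hL : L < (n * m).+1.
  case: hr => S [<- [hn [_ [bs [hm hd]]]]]; rewrite ltnS.
  apply: leq_trans (block_size hd) _; rewrite mulnC; exact: leq_mul.
rewrite /lambda; apply: (leq_trans _ (leq_bigmax_cond (Ordinal hL) _)) => //.
exact/pboolE.
Qed.

Lemma realizable0 s n m : realizable s n m 0.
Proof.
exists [::]; split=> //; split=> //; split.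
  by move=> [a [b [_ h]]]; move: h; rewrite !altS.
by exists [::].
Qed.

Lemma lambda_real s n m : realizable s n m (lambda s n m).
Proof.
rewrite /lambda (bigmax_eq_arg ord0); last exact/pboolE/realizable0.
case: arg_maxnP; first exact/pboolE/realizable0.
by move=> i /pboolE.
Qed.

Lemma transfer (T : eqType) s n m (X : seq T) bs :
  block_decomp X bs -> size bs <= m -> size (undup X) <= n -> ~ has_alt s.+2 X ->
  realizable s n m (size X).
Proof.
case: X => [|x0 X'] hd hm hn na; first exact: realizable0.
set X := x0 :: X' in hd hn na *.
set U := undup X; pose f := index^~ U; pose g := nth x0 U.
have gf : forall x, x \in X -> g (f x) = x by move=> x xX; rewrite /g /f nth_index // mem_undup.
have finj : {in X &, injective f}.
  by move=> x y xX yX /(congr1 g); rewrite !gf.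
case: hd => ub fX.
exists (map f X); split; first by rewrite size_map.
split.
  apply: leq_trans hn; rewrite -(size_map f U); apply: uniq_leq_size; first exact: undup_uniq.
  by move=> y; rewrite mem_undup => /mapP[x xX ->]; apply: map_f; rewrite mem_undup.
split.
  move=> [a [b [ab h]]]; apply: na.
  have aY : a \in map f X by apply: (mem_subseq h); rewrite !altS inE eqxx.
  have bY : b \in map f X by apply: (mem_subseq h); rewrite !altS !inE eqxx orbT.
  exists (g a), (g b); split.
    move: aY bY => /mapP[x xX ax] /mapP[y yX bx]; rewrite ax bx !gf //.
    by apply: contra ab => /eqP xy; rewrite ax bx xy.
  rewrite -alt_map; have -> : X = map g (map f X).
    by rewrite -map_comp map_id_in // => x xX; apply: gf.
  exact: map_subseq.
exists (map (map f) bs); split; first by rewrite size_map.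
split; last by rewrite -map_flatten fX.
apply/allP => b' /mapP[b bin ->]; rewrite map_inj_in_uniq; first by move/allP: ub; apply.
move=> x y xb yb; apply: finj; rewrite -fX; apply/flattenP; by exists b.
Qed.

Lemma alt5 (T : eqType) (a b : T) k :
  alt a b k.+4.+1 = [:: a, b, a, b, a & alt b a k].
Proof. by rewrite !altS. Qed.

Lemma noalt_fresh (S : seq nat) c s : 3 <= s -> c \notin S -> ~ has_alt s.+2 S ->
  ~ has_alt s.+2 (c :: S ++ [:: c]).
Proof.
move=> hs cS na [a [b [ab h]]].
have c0 : count (pred1 c) S = 0 by apply/count_memPn.
have cnt : count (pred1 c) (c :: S ++ [:: c]) = 2.
  by rewrite /= count_cat /= eqxx c0.
have: exists k, s = k.+3 by exists (s - 3); lia.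
case=> k ek; subst s.
case: (eqVneq a c) => [ac|anc].
  subst a; have bc : (b == c) = false by rewrite eq_sym (negbTE ab).
  have := count_sub (pred1 c) h; rewrite cnt alt5 /= eqxx bc; lia.
case: (eqVneq b c) => [bc|bnc].
  subst b; move: h; rewrite alt5 /= (negbTE anc) => h.
  have := count_sub (pred1 c) h; rewrite /= count_cat /= eqxx (negbTE anc) c0; lia.
apply: na; exists a, b; split=> //.
have allp : all (predC1 c) (alt a b k.+4.+1).
  by apply/allP => x /mem_alt /orP[] /eqP ->; rewrite /= ?anc ?bnc.
have -> : S = filter (predC1 c) (c :: S ++ [:: c]).
  rewrite /= eqxx /= filter_cat /= eqxx cats0; apply/esym/all_filterP.
  by apply/allP => x xS /=; apply: contraNneq cS => <-.
by rewrite subseq_filter allp.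
Qed.

Lemma fresh1 s n m L : 3 <= s -> 2 <= m -> realizable s n m L -> realizable s n.+1 m L.+2.
Proof.
move=> hs hm [S [hL [hn [na [bs [hbm [ub fS]]]]]]].
pose c := (\max_(x <- S) x).+1.
have cS : c \notin S.
  apply/negP => cin.
  by have := @leq_bigmax_seq nat S predT (fun x => x) c cin isT; rewrite ltnn.
pose bs2 := bs ++ nseq (2 - size bs) [::].
have hbs2 : 2 <= size bs2 <= m by rewrite size_cat size_nseq; lia.
have fS2 : flatten bs2 = S.
  by rewrite flatten_cat fS; elim: (2 - size bs) => [|k IH]; rewrite ?cats0.
have ub2 : all uniq bs2 by rewrite all_cat ub /=; elim: (2 - size bs).
move: hbs2 fS2 ub2; case: bs2 => [|b0 [|b1 rest]] //= hbs2 fS2 /and3P[u0 u1 ur].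
exists (c :: S ++ [:: c]); split; first by rewrite /= size_cat addn1 hL.
split.
  apply: leq_trans (_ : size (c :: undup S) <= _); last by [].
  apply: uniq_leq_size; first exact: undup_uniq.
  by move=> x; rewrite mem_undup !inE mem_cat inE mem_undup; case: (x == c) => //=; rewrite orbF.
split; first exact: noalt_fresh.
have hl := lastI b1 rest.
exists ((c :: b0) :: rcons (belast b1 rest) (rcons (last b1 rest) c)); split.
  by rewrite /= size_rcons size_belast.
split.
  rewrite /= u0 andbT; apply/andP; split.
    by apply: contra cS => cb; rewrite -fS2 mem_cat cb.
  rewrite all_rcons rcons_uniq.
  have : all uniq (b1 :: rest) by rewrite /= u1.
  rewrite hl all_rcons => /andP[-> ->]; rewrite andbT.
  rewrite andbT; apply: contra cS => cb; rewrite -fS2 mem_cat; apply/orP; right.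
  have h2 : c \in flatten (b1 :: rest) by apply/flattenP; exists (last b1 rest) => //; rewrite hl mem_rcons inE eqxx.
  exact: h2.
rewrite /= flatten_rcons -cats1 -fS2.
have -> : b1 ++ flatten rest = flatten (belast b1 rest) ++ last b1 rest.
  by rewrite -flatten_rcons -hl.
by rewrite !catA.
Qed.

Lemma freshk s n m L k : 3 <= s -> 2 <= m -> realizable s n m L ->
  realizable s (n + k) m (L + 2 * k).
Proof.
move=> hs hm; elim: k => [|k IH] h; first by rewrite muln0 !addn0.
have := fresh1 hs hm (IH h); congr realizable; lia.
Qed.

Definition tagseq (T : Type) (x : seq T) (q : nat) : seq (T * nat) := [seq (y, q) | y <- x].

Lemma fst_tagseq (T : Type) (x : seq T) q : map fst (tagseq x q) = x.
Proof. by rewrite /tagseq -map_comp map_id. Qed.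

Lemma pairwise_true (T : Type) (r : rel T) (s : seq T) : (forall x y, r x y) -> pairwise r s.
Proof. move=> H; elim: s => //= x s ->; rewrite andbT; elim: s => //= y s ->; by rewrite H. Qed.

Section Tag.
Variable T : eqType.
Variable A : seq (seq T).
Local Notation k := (size A).
Local Notation Aq := (nth [::] A).

Definition tagJ j n := flatten [seq tagseq (Aq r) r | r <- iota j n].
Definition tagI := tagJ 0 k.

Lemma mem_tagJ j n x q : ((x, q) \in tagJ j n) = (j <= q < j + n) && (x \in Aq q).
Proof.
apply/flatten_mapP/idP => [[r rin /mapP[y yin [-> ->]]]|/andP[qin xin]].
  by rewrite -mem_iota rin.
by exists q; rewrite ?mem_iota // map_f.
Qed.

Lemma mem_tagI x q : ((x, q) \in tagI) = (q < k) && (x \in Aq q).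
Proof. by rewrite /tagI mem_tagJ. Qed.

Lemma memA x q : x \in Aq q -> q < k.
Proof. by case: (ltnP q k) => // h; rewrite nth_default. Qed.

Lemma fst_tagI : map fst tagI = flatten A.
Proof.
rewrite /tagI /tagJ map_flatten -map_comp.
rewrite (eq_map (g := fun r => Aq r)); last by move=> r /=; rewrite fst_tagseq.
by rewrite -/(mkseq _ _) mkseq_nth.
Qed.

Lemma size_tagI : size tagI = size (flatten A).
Proof. by rewrite -fst_tagI size_map. Qed.

Lemma tagJ_pairwise j n : pairwise (fun p p' : T * nat => p.2 <= p'.2) (tagJ j n).
Proof.
elim: n j => [|n IH] j //=; rewrite /tagJ /= pairwise_cat -/(tagJ _ _) IH andbT.
apply/andP; split.
  apply/allrelP => p p' /mapP[y _ ->] /=; case: p' => x q; rewrite mem_tagJ.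
  by case/andP=> /andP[h _] _; apply: ltnW.
rewrite /tagseq pairwise_map; apply: pairwise_true => x y /=; exact: leqnn.
Qed.

Lemma filter_tagJ j n q : filter (fun p => p.2 == q) (tagJ j n) =
  if j <= q < j + n then tagseq (Aq q) q else [::].
Proof.
elim: n j => [|n IH] j; first by rewrite /tagJ /= addn0; case: leqP => //= h; rewrite ltnNge h.
rewrite /tagJ /= filter_cat -/(tagJ _ _) IH.
have -> : filter (fun p => p.2 == q) (tagseq (Aq j) j) = if j == q then tagseq (Aq j) j else [::].
  rewrite /tagseq filter_map /preim /=; case: eqP => _.
    by rewrite filter_predT.
  by rewrite filter_pred0.
case: (eqVneq j q) => [<-|jq].
  by rewrite ltnn /= cats0 leqnn addnS ltnS leq_addr.
by rewrite /= ltn_neqAle jq /= addnS addSn.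
Qed.


Lemma filter_tagI q : q < k -> filter (fun p => p.2 == q) tagI = tagseq (Aq q) q.
Proof. by move=> qk; rewrite /tagI filter_tagJ qk. Qed.

Lemma loc_alt a b qa qb j : 3 <= j ->
  subseq (alt (a, qa) (b, qb) j) tagI -> qa = qb /\ subseq (alt a b j) (Aq qa).
Proof.
move=> hj h.
have hp := subseq_pairwise h (tagJ_pairwise 0 k).
have : exists i, j = i.+3 by exists (j - 3); lia.
case=> i ej; subst j.
move: hp; rewrite !altS /= => /and4P[/and3P[h1 _ _] /andP[h2 _] _ _].
have eq : qa = qb by apply/eqP; rewrite eqn_leq h1 h2.
subst qb; split=> //.
have qk : qa < k.
  have : (a, qa) \in tagI by apply: (mem_subseq h); rewrite altS inE eqxx.
  by rewrite mem_tagI => /andP[].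
have h' : subseq (tagseq (alt a b i.+3) qa) (filter (fun p => p.2 == qa) tagI).
  rewrite subseq_filter /tagseq alt_map h andbT.
  by apply/allP => p /mem_alt /orP[] /eqP ->.
by move: (map_subseq fst h'); rewrite filter_tagI // !fst_tagseq !altS.
Qed.

Lemma flatten_split q : q < k ->
  flatten A = flatten (take q A) ++ Aq q ++ flatten (drop q.+1 A).
Proof.
move=> qk; rewrite -{1}(cat_take_drop q A) flatten_cat (drop_nth [::]) //.
Qed.

Lemma mem_before z r q : r < q -> z \in Aq r -> z \in flatten (take q A).
Proof.
move=> rq zr; apply/flattenP; exists (nth [::] (take q A) r) => //.
  apply: mem_nth; rewrite size_take; have := memA zr; case: ifP => _ //; lia.
by rewrite nth_take.
Qed.

Lemma mem_after z r q : q < r -> z \in Aq r -> z \in flatten (drop q.+1 A).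
Proof.
move=> qr zr; apply/flattenP; exists (nth [::] (drop q.+1 A) (r - q.+1)).
  apply: mem_nth; rewrite size_drop; have h := memA zr; apply: (ltn_sub2r _ h); exact: leq_ltn_trans qr h.
by rewrite nth_drop subnKC.
Qed.

Lemma ext_after w z q r : q < r -> subseq w (Aq q) -> z \in Aq r ->
  subseq (rcons w z) (flatten A).
Proof.
move=> qr hw zr; rewrite (flatten_split (ltn_trans qr (memA zr))) -cats1.
rewrite -[_ ++ [:: z]]cat0s; apply: cat_subseq; first exact: sub0seq.
by apply: cat_subseq => //; rewrite sub1seq; apply: mem_after zr.
Qed.

Lemma ext_before w z q r : r < q -> q < k -> subseq w (Aq q) -> z \in Aq r ->
  subseq (z :: w) (flatten A).
Proof.
move=> rq qk hw zr; rewrite (flatten_split qk) -cat1s -[w]cats0.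
apply: cat_subseq; first by rewrite sub1seq; apply: mem_before zr.
by apply: cat_subseq => //; exact: sub0seq.
Qed.

Lemma ext_both w z1 z2 q r1 r2 : r1 < q -> q < r2 -> subseq w (Aq q) -> z1 \in Aq r1 ->
  z2 \in Aq r2 -> subseq (z1 :: rcons w z2) (flatten A).
Proof.
move=> rq qr hw zr1 zr2; rewrite (flatten_split (ltn_trans qr (memA zr2))) -cat1s -cats1.
apply: cat_subseq; first by rewrite sub1seq; apply: mem_before zr1.
by apply: cat_subseq => //; rewrite sub1seq; apply: mem_after zr2.
Qed.

End Tag.

Lemma countI (T : Type) (a b : pred T) s :
  count a s = count (predI a b) s + count (predI a (predC b)) s.
Proof. elim: s => //= x s ->; case: (a x); case: (b x) => /=; lia. Qed.

Section Classes.
Variable T : eqType.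
Variable A : seq (seq T).
Local Notation k := (size A).
Local Notation Aq := (nth [::] A).
Local Notation tI := (tagI A).

Definition loc (p : T * nat) := only_in A p.2 p.1.
Definition isF (p : T * nat) := all (fun r => p.1 \notin Aq r) (iota 0 p.2).
Definition isL (p : T * nat) := all (fun r => p.1 \notin Aq r) (iota p.2.+1 (k - p.2.+1)).
Definition fP p := ~~ loc p && isF p.
Definition lP p := ~~ loc p && isL p.
Definition mP p := [&& ~~ loc p, ~~ isF p & ~~ isL p].

Lemma nonloc_ex x q : ~~ loc (x, q) -> exists r, [/\ r < k, r != q & x \in Aq r].
Proof.
rewrite /loc /only_in => /allPn[r rin]; rewrite negb_or negbK /= => /andP[rq xr].
by exists r; split=> //; move: rin; rewrite mem_iota.
Qed.

Lemma notF_ex x q : ~~ isF (x, q) -> exists2 r, r < q & x \in Aq r.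
Proof. case/allPn => r; rewrite mem_iota => /andP[_ rq]; rewrite negbK => xr; by exists r. Qed.

Lemma notL_ex x q : ~~ isL (x, q) -> exists2 r, q < r & x \in Aq r.
Proof. case/allPn => r; rewrite mem_iota => /andP[rq _]; rewrite negbK => xr; by exists r. Qed.

Lemma F_of x q r : isF (x, q) -> x \in Aq r -> q <= r.
Proof.
move=> /allP h xr; rewrite leqNgt; apply/negP => rq.
by have := h r; rewrite mem_iota rq /= xr => /(_ isT).
Qed.

Lemma L_of x q r : isL (x, q) -> x \in Aq r -> r <= q.
Proof.
move=> /allP h xr; rewrite leqNgt; apply/negP => qr.
have rk := memA xr.
have e : r < q.+1 + (k - q.+1) by lia.
by have := h r; rewrite mem_iota qr e xr => /(_ isT).
Qed.

Lemma not_FL p : p \in tI -> ~~ loc p -> ~~ (isF p && isL p).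
Proof.
case: p => x q pin /nonloc_ex[r [rk rq xr]]; apply/negP => /andP[hF hL].
have := F_of hF xr; have := L_of hL xr; move: rq => /eqP; lia.
Qed.

Lemma partition_cnt (s : seq (T * nat)) : {subset s <= tI} ->
  size s = count loc s + count fP s + count lP s + count mP s.
Proof.
move=> sub.
have h0 := count_predC loc s.
have h1 := countI (predC loc) isF s.
have h2 := countI (predI (predC loc) (predC isF)) isL s.
have e1 : count (predI (predC loc) isF) s = count fP s by apply: eq_count.
have e3 : count (predI (predI (predC loc) (predC isF)) (predC isL)) s = count mP s.
  by apply: eq_count => p; rewrite /= /mP andbA.
have e2 : count (predI (predI (predC loc) (predC isF)) isL) s = count lP s.
  apply: eq_in_count => p /sub pin /=; rewrite /lP.
  case: (boolP (loc p)) => //= nl; case: (boolP (isL p)); rewrite ?andbT ?andbF //.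
  by have := not_FL pin nl; case: (isF p) => //= /negPf ->.
lia.
Qed.

Definition tagf (P : pred (T * nat)) x := find (fun r => P (x, r) && ((x, r) \in tI)) (iota 0 k).

Lemma tagfP (P : pred (T * nat)) :
  (forall x q q', (x, q) \in tI -> (x, q') \in tI -> P (x, q) -> P (x, q') -> q = q') ->
  forall x q, (x, q) \in tI -> P (x, q) -> q = tagf P x.
Proof.
move=> U x q xin Pq.
have qk : q < k by move: xin; rewrite mem_tagI => /andP[].
have hh : has (fun r => P (x, r) && ((x, r) \in tI)) (iota 0 k).
  by apply/hasP; exists q; rewrite ?mem_iota ?Pq ?xin.
have := nth_find 0 hh; rewrite -/(tagf P x).
have := hh; rewrite has_find size_iota => fk.
rewrite nth_iota // add0n => /andP[P2 in2]; exact: U P2.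
Qed.

Lemma endpoint_alt (P : pred (T * nat)) a b j :
  (forall x q q', (x, q) \in tI -> (x, q') \in tI -> P (x, q) -> P (x, q') -> q = q') ->
  3 <= j -> subseq (alt a b j) (map fst (filter P tI)) ->
  exists q, [/\ subseq (alt a b j) (Aq q), (a, q) \in filter P tI & (b, q) \in filter P tI].
Proof.
move=> U hj /subseqP[msk hsz]; rewrite -map_mask => halt.
set w := mask msk _ in halt.
have wsub : {subset w <= filter P tI} by move=> p /mem_mask.
have ew : w = alt (a, tagf P a) (b, tagf P b) j.
  rewrite -(alt_map (fun y => (y, tagf P y))) halt -map_comp map_id_in // => p /wsub.
  by rewrite mem_filter; case: p => x q /andP[Px xin] /=; rewrite -(tagfP U xin Px).
have hw : subseq w tI by apply: subseq_trans (mask_subseq _ _) (filter_subseq _ _).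
rewrite ew in hw; have [eq hs] := loc_alt hj hw.
exists (tagf P a); split => //.
  apply: wsub; rewrite ew; have -> : j = (j.-1).+1 by lia.
  by rewrite altS inE eqxx.
rewrite eq; apply: wsub; rewrite ew; have -> : j = (j.-2).+2 by lia.
by rewrite !altS !inE eqxx orbT.
Qed.

Lemma fP_uniq x q q' : (x, q) \in tI -> (x, q') \in tI -> fP (x, q) -> fP (x, q') -> q = q'.
Proof.
rewrite !mem_tagI => /andP[_ h1] /andP[_ h2] /andP[_ f1] /andP[_ f2].
by apply/eqP; rewrite eqn_leq (F_of f1 h2) (F_of f2 h1).
Qed.

Lemma lP_uniq x q q' : (x, q) \in tI -> (x, q') \in tI -> lP (x, q) -> lP (x, q') -> q = q'.
Proof.
rewrite !mem_tagI => /andP[_ h1] /andP[_ h2] /andP[_ f1] /andP[_ f2].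
by apply/eqP; rewrite eqn_leq (L_of f1 h2) (L_of f2 h1).
Qed.

Variable s : nat.
Hypothesis hs : 3 <= s.
Hypothesis na : ~ has_alt s.+2 (flatten A).

Lemma F_noalt : ~ has_alt s.+1 (map fst (filter fP tI)).
Proof.
move=> [a [b [ab h]]].
have [q [hq ha hb]] := endpoint_alt fP_uniq (leqW hs) h.
pose z := if odd s.+1 then b else a.
have hz : (z, q) \in filter fP tI by rewrite /z; case: odd.
move: hz; rewrite mem_filter => /andP[/andP[nl fz] _].
have [r [rk rq zr]] := nonloc_ex nl.
have qr : q < r by rewrite ltn_neqAle eq_sym rq (F_of fz zr).
apply: na; exists a, b; split=> //; rewrite alt_rcons; exact: ext_after qr hq zr.
Qed.

Lemma L_noalt : ~ has_alt s.+1 (map fst (filter lP tI)).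
Proof.
move=> [a [b [ab h]]].
have [q [hq ha hb]] := endpoint_alt lP_uniq (leqW hs) h.
move: hb; rewrite mem_filter => /andP[/andP[nl fz] bin].
have qk : q < k by move: bin; rewrite mem_tagI => /andP[].
have [r [rk rq zr]] := nonloc_ex nl.
have qr : r < q by rewrite ltn_neqAle rq (L_of fz zr).
apply: na; exists b, a; split; first by rewrite eq_sym.
rewrite altS; exact: ext_before qr qk hq zr.
Qed.

Lemma M_noalt : ~ has_alt s (filter mP tI).
Proof.
move=> [[a qa] [[b qb] [ab h]]].
have [eq hq] := loc_alt hs (subseq_trans h (filter_subseq _ _)); subst qb.
have es : s = s.-2.+2 by lia.
have ha : (a, qa) \in filter mP tI by apply: (mem_subseq h); rewrite es !altS inE eqxx.
have hb : (b, qa) \in filter mP tI by apply: (mem_subseq h); rewrite es !altS !inE eqxx orbT.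
have ab' : a != b by apply: contra ab => /eqP ->.
pose z := if odd s then b else a.
have hz : (z, qa) \in filter mP tI by rewrite /z; case: odd.
move: hb hz; rewrite !mem_filter => /andP[/and3P[_ fb _] _] /andP[/and3P[_ _ lz] _].
have [r1 r1q br1] := notF_ex fb.
have [r2 qr2 zr2] := notL_ex lz.
apply: na; exists b, a; split; first by rewrite eq_sym.
rewrite altS alt_rcons; exact: ext_both r1q qr2 hq br1 zr2.
Qed.

End Classes.

Section Count.
Variable T : eqType.
Variable A : seq (seq T).
Local Notation k := (size A).
Local Notation Aq := (nth [::] A).
Local Notation tI := (tagI A).

Definition UU := undup (flatten A).
Definition lq q x := (x \in Aq q) && only_in A q x.
Definition glob x := ~~ has (fun q => lq q x) (iota 0 k).
Definition gg := count glob UU.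

Lemma mem_flattenA x : (x \in flatten A) = has (fun q => (x, q) \in tI) (iota 0 k).
Proof.
rewrite -fst_tagI; apply/mapP/hasP => [[[y q] pin /= ->]|[q _ pin]].
  by exists q => //; move: pin; rewrite mem_tagI mem_iota => /andP[-> _].
by exists (x, q).
Qed.

Lemma lq_disj q r x : lq q x -> lq r x -> q = r.
Proof.
move=> /andP[xq _] /andP[_ /allP h]; have := h q; rewrite mem_iota /= (memA xq).
by rewrite xq orbF => /(_ isT) /eqP.
Qed.

Lemma checkn_eq q : checkn A q = count (lq q) UU.
Proof.
rewrite /checkn -!size_filter; apply: perm_size; apply: uniq_perm.
- by apply: filter_uniq; apply: undup_uniq.
- by apply: filter_uniq; apply: undup_uniq.
move=> x; rewrite !mem_filter !mem_undup /lq.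
case: (boolP (x \in Aq q)) => xq; last by rewrite andbF.
rewrite andbT; case: (only_in A q x) => //=; apply/esym/flattenP.
by exists (Aq q) => //; apply: mem_nth; apply: memA xq.
Qed.

Lemma sum_cn_gen j : j <= k ->
  sumn [seq checkn A q | q <- iota 0 j] + count (fun x => ~~ has (fun q => lq q x) (iota 0 j)) UU
  = size UU.
Proof.
elim: j => [|j IH] hj; first by rewrite /= add0n count_predT.
rewrite (_ : iota 0 j.+1 = iota 0 j ++ [:: j]); last by rewrite -addn1 iotaD.
rewrite map_cat sumn_cat /= addn0 -addnA.
rewrite -[RHS](IH (ltnW hj)); congr (_ + _).
rewrite checkn_eq (countI (fun x => ~~ has (fun q => lq q x) (iota 0 j)) (lq j)).
congr (_ + _).
  apply: eq_count => x /=; case: (boolP (lq j x)) => hj' /=; last by rewrite andbF.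
  rewrite andbT; apply/esym/hasPn => q; rewrite mem_iota => /andP[_ qj]; apply/negP => /lq_disj /(_ hj').
  by move=> e; move: qj; rewrite e ltnn.
apply: eq_count => x /=; rewrite has_cat /= orbF negb_or.
by case: (lq j x); rewrite ?andbF ?andbT.
Qed.

Lemma sum_cn : sumn [seq checkn A q | q <- iota 0 k] + gg = size UU.
Proof. exact: sum_cn_gen. Qed.

Lemma nonloc_glob x q : (x, q) \in tI -> ~~ loc A (x, q) -> glob x.
Proof.
rewrite mem_tagI => /andP[qk xq] nl; apply/hasPn => r _; apply/negP => /andP[xr /allP h].
have := h q; rewrite mem_iota qk /= xq orbF => /(_ isT) /eqP e; subst r.
by move: nl; rewrite /loc /= /only_in; apply/negP/negPn/allP.
Qed.

Lemma glob_first x : x \in UU -> glob x -> exists q, (x, q) \in tI /\ fP A (x, q).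
Proof.
rewrite mem_undup mem_flattenA => /hasP[q0 _ p0] gx.
have ex : exists q, (x, q) \in tI by exists q0.
case: (ex_minnP ex) => q pin qmin; exists q; split => //.
apply/andP; split.
  apply/negP; rewrite /loc /= => hl; move/hasPn: gx => /(_ q); rewrite /lq.
  move: (pin); rewrite mem_tagI mem_iota => /andP[qk xq]; rewrite xq hl qk /=.
  by move/(_ isT).
apply/allP => r; rewrite mem_iota => /andP[_ rq]; apply/negP => xr.
have : (x, r) \in tI by rewrite mem_tagI xr (ltn_trans rq) //; move: pin; rewrite mem_tagI => /andP[].
by move/qmin; rewrite leqNgt rq.
Qed.

Lemma glob_last x : x \in UU -> glob x -> exists q, (x, q) \in tI /\ lP A (x, q).
Proof.
rewrite mem_undup mem_flattenA => /hasP[q0 _ p0] gx.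
have ex : exists q, (x, q) \in tI by exists q0.
have ub : forall q, (x, q) \in tI -> q <= k.
  by move=> q; rewrite mem_tagI => /andP[/ltnW].
case: (ex_maxnP ex ub) => q pin qmax; exists q; split => //.
apply/andP; split.
  apply/negP; rewrite /loc /= => hl; move/hasPn: gx => /(_ q); rewrite /lq.
  move: (pin); rewrite mem_tagI mem_iota => /andP[qk xq]; rewrite xq hl qk /=.
  by move/(_ isT).
apply/allP => r; rewrite mem_iota => /andP[qr rk]; apply/negP => xr.
have : (x, r) \in tI by rewrite mem_tagI xr (memA xr).
by move/qmax; rewrite leqNgt qr.
Qed.

Lemma undup_fst_le (P : pred (T * nat)) : (forall p, P p -> ~~ loc A p) ->
  size (undup (map fst (filter P tI))) <= gg.
Proof.
move=> hP; rewrite /gg -size_filter; apply: uniq_leq_size; first exact: undup_uniq.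
move=> x; rewrite mem_undup => /mapP[[y q] hin ->] /=.
have /andP[Pp pin] : P (y, q) && ((y, q) \in tI) by rewrite -mem_filter.
rewrite mem_filter (nonloc_glob pin (hP _ Pp)) /UU mem_undup -fst_tagI /=.
by apply/mapP; exists (y, q).
Qed.

Definition DD := undup (filter (predC (loc A)) tI).

Lemma DD_sub : {subset DD <= tI}.
Proof. by move=> p; rewrite mem_undup mem_filter => /andP[]. Qed.

Lemma count_fP_DD : gg <= count (fP A) DD.
Proof.
rewrite /gg -!size_filter -(size_map fst (filter (fP A) DD)).
apply: uniq_leq_size; first by apply: filter_uniq; apply: undup_uniq.
move=> x; rewrite mem_filter => /andP[gx xU].
have [q [pin fq]] := glob_first xU gx.
apply/mapP; exists (x, q) => //; rewrite mem_filter fq mem_undup mem_filter pin andbT.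
by case/andP: fq.
Qed.

Lemma count_lP_DD : gg <= count (lP A) DD.
Proof.
rewrite /gg -!size_filter -(size_map fst (filter (lP A) DD)).
apply: uniq_leq_size; first by apply: filter_uniq; apply: undup_uniq.
move=> x; rewrite mem_filter => /andP[gx xU].
have [q [pin fq]] := glob_last xU gx.
apply/mapP; exists (x, q) => //; rewrite mem_filter fq mem_undup mem_filter pin andbT.
by case/andP: fq.
Qed.

Lemma count_mP_DD : count (mP A) DD = size (undup (filter (mP A) tI)).
Proof.
rewrite /DD -size_filter filter_undup -filter_predI; congr (size (undup _)).
by apply: eq_filter => p /=; rewrite /mP; case: (loc A p); rewrite /= ?andbT.
Qed.

Lemma count_loc_DD : count (loc A) DD = 0.
Proof.
apply/eqP; rewrite -leqn0 leqNgt -has_count; apply/hasPn => p.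
by rewrite mem_undup mem_filter => /andP[].
Qed.

Lemma DD_size : 2 * gg + size (undup (filter (mP A) tI)) <= size DD.
Proof.
rewrite (partition_cnt DD_sub) count_loc_DD -count_mP_DD.
have := count_fP_DD; have := count_lP_DD; lia.
Qed.

Definition Shat := flatten [seq undup (filter (fun x => ~~ only_in A q x) (Aq q)) | q <- iota 0 k].

Lemma Shat_size : size DD <= size Shat.
Proof.
pose Sh' := flatten [seq tagseq (undup (filter (fun x => ~~ only_in A q x) (Aq q))) q | q <- iota 0 k].
have -> : size Shat = size Sh'.
  rewrite /Shat /Sh' !size_flatten /shape -!map_comp; congr sumn; apply: eq_map => q /=.
  by rewrite size_map.
apply: uniq_leq_size; first exact: undup_uniq.
move=> [x q]; rewrite mem_undup mem_filter /= => /andP[nl pin].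
move: (pin); rewrite mem_tagI => /andP[qk xq].
apply/flatten_mapP; exists q; first by rewrite mem_iota.
by apply: map_f; rewrite mem_undup mem_filter xq andbT.
Qed.

Lemma subseq_flatten_map (I U : eqType) (f h : I -> seq U) (s : seq I) :
  (forall i, subseq (f i) (h i)) -> subseq (flatten (map f s)) (flatten (map h s)).
Proof. by move=> H; elim: s => //= i s IH; apply: cat_subseq. Qed.

Lemma Shat_sub : subseq Shat (flatten A).
Proof.
have -> : flatten A = flatten [seq Aq q | q <- iota 0 k] by rewrite -/(mkseq _ _) mkseq_nth.
apply: subseq_flatten_map => q; exact: subseq_trans (undup_subseq _) (filter_subseq _ _).
Qed.

Lemma Shat_undup : size (undup Shat) <= gg.
Proof.
rewrite /gg -size_filter; apply: uniq_leq_size; first exact: undup_uniq.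
move=> x; rewrite mem_undup => /flatten_mapP[q]; rewrite mem_iota /= => qk.
rewrite mem_undup mem_filter => /andP[nl xq].
have pin : (x, q) \in tI by rewrite mem_tagI xq qk.
rewrite mem_filter (nonloc_glob pin nl) /UU mem_undup -fst_tagI.
by apply/mapP; exists (x, q).
Qed.

Lemma Shat_real s : ~ has_alt s.+2 (flatten A) -> realizable s gg k (size Shat).
Proof.
move=> na; apply: (transfer (bs := [seq undup (filter (fun x => ~~ only_in A q x) (Aq q)) | q <- iota 0 k])).
- split => //; apply/allP => b /mapP[q _ ->]; exact: undup_uniq.
- by rewrite size_map size_iota.
- exact: Shat_undup.
- exact: noalt_sub Shat_sub na.
Qed.

End Count.

Lemma bd_filter (U : eqType) (X : seq U) (bs : seq (seq U)) (P : pred U) :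
  block_decomp X bs -> block_decomp (filter P X) (map (filter P) bs).
Proof.
case=> ub fX; split; last by rewrite -fX filter_flatten.
by apply/allP => b' /mapP[b bin ->]; apply: filter_uniq; move/allP: ub; apply.
Qed.

Lemma bd_map (U V : eqType) (f : U -> V) (X : seq U) (bs : seq (seq U)) :
  (forall b, b \in bs -> {in b &, injective f}) ->
  block_decomp X bs -> block_decomp (map f X) (map (map f) bs).
Proof.
move=> hi [ub fX]; split; last by rewrite -fX map_flatten.
apply/allP => b' /mapP[b bin ->]; rewrite map_inj_in_uniq; last exact: hi.
by move/allP: ub; apply.
Qed.

Lemma flatten_flatten (U : Type) (L : seq (seq (seq U))) :
  flatten (flatten L) = flatten (map flatten L).
Proof. by elim: L => //= l L IH; rewrite flatten_cat IH. Qed.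

Lemma sumn_iota_big (f : nat -> nat) n : sumn [seq f q | q <- iota 0 n] = \sum_(q < n) f q.
Proof. by rewrite sumnE big_map -(subn0 n) -/(index_iota 0 n) big_mkord subn0. Qed.

Section Main.
Variable T : eqType.
Variables (s n m mhat : nat) (S : seq T) (bs : seq (seq T)) (ms : seq nat).
Hypotheses (hs : 3 <= s) (hn : size (undup S) <= n) (hm : size bs = m)
  (hbd : block_decomp S bs) (na : ~ has_alt s.+2 S) (hmh : 2 <= mhat)
  (hms : size ms = mhat) (hsum : sumn ms = m).

Let G := reshape ms bs.
Let A := intervals bs ms.
Local Notation Aq := (nth [::] A).
Local Notation Gq := (nth [::] G).

Lemma sizeA : size A = mhat.
Proof. by rewrite /A /intervals size_map size_reshape. Qed.

Lemma flattenG : flatten G = bs.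
Proof. by rewrite /G reshapeKr // hsum hm. Qed.

Lemma flattenA : flatten A = S.
Proof. by rewrite /A /intervals -flatten_flatten flattenG; case: hbd. Qed.

Lemma sizeGq q : q < mhat -> size (Gq q) = nth 0 ms q.
Proof.
move=> qm; have := reshapeKl (sh := ms) (s := bs); rewrite hsum hm => /(_ (leqnn _)) e.
have := congr1 (fun l => nth 0 l q) e; rewrite /shape (nth_map [::]) ?size_reshape ?hms //.
Qed.

Lemma AqE q : Aq q = flatten (Gq q).
Proof.
case: (ltnP q mhat) => qm; first by rewrite /A /intervals (nth_map [::]) // size_reshape hms.
by rewrite !nth_default // ?size_map size_reshape hms.
Qed.

Lemma Gq_sub q b : b \in Gq q -> b \in bs.
Proof.
move=> bin; rewrite -flattenG; apply/flattenP; exists (Gq q) => //; apply: mem_nth.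
by case: (ltnP q (size G)) => // h; move: bin; rewrite nth_default.
Qed.

Lemma Aq_sub q : q < mhat -> subseq (Aq q) S.
Proof.
move=> qm; rewrite -flattenA (flatten_split (A := A) (q := q)) ?sizeA //.
have e : Aq q = [::] ++ (Aq q ++ [::]) by rewrite cats0.
rewrite {1}e; apply: cat_subseq; first exact: sub0seq.
by apply: cat_subseq => //; exact: sub0seq.
Qed.

Definition bsT := flatten [seq [seq tagseq b q | b <- Gq q] | q <- iota 0 mhat].

Lemma bdT : block_decomp (tagI A) bsT.
Proof.
split.
  apply/allP => b' /flatten_mapP[q _ /mapP[b bin ->]].
  rewrite /tagseq map_inj_uniq; last by move=> x y [].
  by have [ub _] := hbd; move/allP: ub; apply; apply: Gq_sub bin.
rewrite /bsT flatten_flatten /tagI /tagJ sizeA -map_comp; congr flatten.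
by apply: eq_map => q /=; rewrite /tagseq -map_flatten -AqE.
Qed.

Lemma size_bsT : size bsT = m.
Proof.
rewrite /bsT size_flatten /shape -map_comp -hsum.
have -> : [seq (size \o (fun q => [seq tagseq b q | b <- Gq q])) q | q <- iota 0 mhat] = [seq nth 0 ms q | q <- iota 0 mhat].
  by apply/eq_in_map => q; rewrite mem_iota => /andP[_ qm] /=; rewrite size_map sizeGq.
by rewrite -hms -/(mkseq _ _) mkseq_nth.
Qed.

Lemma bsT_inj (b' : seq (T * nat)) : b' \in map (filter (fun _ => true)) bsT -> True.
Proof. by []. Qed.

Lemma fst_inj_filter (P : pred (T * nat)) b' : b' \in map (filter P) bsT -> {in b' &, injective fst}.
Proof.
move=> /mapP[b0 /flatten_mapP[q _ /mapP[b _ ->]] ->] [x1 q1] [x2 q2].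
rewrite !mem_filter /tagseq => /andP[_ /mapP[y1 _ [_ ->]]] /andP[_ /mapP[y2 _ [_ ->]]] /= ->.
by [].
Qed.

Let cn := [seq checkn A q | q <- iota 0 mhat].
Let nhat := n - sumn cn.

Lemma g_le : sumn cn + gg A <= n.
Proof. by rewrite /cn -sizeA sum_cn /UU flattenA. Qed.

Lemma nhatE : nhat + sumn cn = n.
Proof. by have := g_le; rewrite /nhat; lia. Qed.

Lemma noalt_A : ~ has_alt s.+2 (flatten A).
Proof. by rewrite flattenA. Qed.

Lemma local_bound q : q < mhat ->
  count (loc A) (tagseq (Aq q) q) <= lambda s (checkn A q) (nth 0 ms q).
Proof.
move=> qm; rewrite /tagseq count_map.
have -> : count (preim (fun y => (y, q)) (loc A)) (Aq q) = size (filter (only_in A q) (Aq q)).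
  by rewrite size_filter.
apply: realizable_le; apply: (transfer (bs := map (filter (only_in A q)) (Gq q))).
- apply: bd_filter; split; last by rewrite AqE.
  by apply/allP => b /Gq_sub; have [/allP ub _] := hbd; apply: ub.
- by rewrite size_map sizeGq.
- by rewrite -filter_undup size_filter.
- exact: noalt_sub (subseq_trans (filter_subseq _ _) (Aq_sub qm)) na.
Qed.

Lemma F_bound : count (fP A) (tagI A) <= lambda s.-1 nhat m.
Proof.
rewrite -size_filter -(size_map fst); apply: realizable_le.
apply: (transfer (bs := map (map fst) (map (filter (fP A)) bsT))).
- apply: bd_map; last exact: bd_filter bdT.
  by move=> b' /fst_inj_filter.
- by rewrite !size_map size_bsT.
- apply: leq_trans (undup_fst_le _) _; first by move=> p /andP[].
  by have := g_le; rewrite /nhat; lia.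
- have -> : s.-1.+2 = s.+1 by lia.
  exact: F_noalt hs noalt_A.
Qed.

Lemma L_bound : count (lP A) (tagI A) <= lambda s.-1 nhat m.
Proof.
rewrite -size_filter -(size_map fst); apply: realizable_le.
apply: (transfer (bs := map (map fst) (map (filter (lP A)) bsT))).
- apply: bd_map; last exact: bd_filter bdT.
  by move=> b' /fst_inj_filter.
- by rewrite !size_map size_bsT.
- apply: leq_trans (undup_fst_le _) _; first by move=> p /andP[].
  by have := g_le; rewrite /nhat; lia.
- have -> : s.-1.+2 = s.+1 by lia.
  exact: L_noalt hs noalt_A.
Qed.

Lemma nu_bound : size (undup (filter (mP A) (tagI A))) <= lambda s nhat mhat - 2 * nhat.
Proof.
have h1 := DD_size A.
have h2 := Shat_size A.
have hr0 := Shat_real noalt_A; rewrite sizeA in hr0.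
have hr := freshk (nhat - gg A) hs hmh hr0.
have h3 := realizable_le hr.
have h4 := g_le.
have e : gg A + (nhat - gg A) = nhat by rewrite /nhat; lia.
rewrite e in h3; lia.
Qed.

Lemma M_bound : count (mP A) (tagI A) <= lambda (s - 2) (lambda s nhat mhat - 2 * nhat) m.
Proof.
rewrite -size_filter; apply: realizable_le.
apply: (transfer (bs := map (filter (mP A)) bsT)).
- exact: bd_filter bdT.
- by rewrite size_map size_bsT.
- exact: nu_bound.
- have -> : (s - 2).+2 = s by lia.
  exact: M_noalt hs noalt_A.
Qed.

Lemma main1 : size S <= rhs s m mhat ms nhat cn.
Proof.
rewrite -flattenA -size_tagI (partition_cnt (A := A) (s := tagI A)) //.
rewrite /rhs.
have hl : count (loc A) (tagI A) <= \sum_(q < mhat) lambda s (nth 0 cn q) (nth 0 ms q).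
  rewrite /tagI /tagJ count_flatten -map_comp sizeA.
  rewrite (sumn_iota_big (fun q => count (loc A) (tagseq (Aq q) q))).
  apply: leq_sum => [[q qm]] _ /=.
  rewrite /cn (nth_map 0) ?size_iota // nth_iota // add0n.
  exact: local_bound.
have := F_bound; have := L_bound; have := M_bound; lia.
Qed.

End Main.

Theorem mainTheorem5 :
  (forall (T : eqType) (s n m mhat : nat) (S : seq T) (bs : seq (seq T)) (ms : seq nat),
     3 <= s ->
     size (undup S) <= n ->
     size bs = m ->
     block_decomp S bs ->
     ~ has_alt (s.+2) S ->
     2 <= mhat -> mhat < m ->
     size ms = mhat -> all (fun mq => 0 < mq) ms -> sumn ms = m ->
     let Ss := intervals bs ms in
     let cn := [seq checkn Ss q | q <- iota 0 mhat] in
     let nhat := n - sumn cn in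
     size S <= rhs s m mhat ms nhat cn)
  /\
  (forall (s n m mhat : nat) (ms : seq nat),
     3 <= s ->
     2 <= mhat -> mhat < m ->
     size ms = mhat -> all (fun mq => 0 < mq) ms -> sumn ms = m ->
     exists (nhat : nat) (cn : seq nat),
       size cn = mhat /\ nhat + sumn cn = n /\
       lambda s n m <= rhs s m mhat ms nhat cn).
Proof.
split.
  move=> T s n m mhat S bs ms hs hn hm hbd na hmh _ hms _ hsum /=.
  exact: (main1 hs hn hm hbd na hmh hms hsum).
move=> s n m mhat ms hs hmh _ hms _ hsum.
have [S [hL [hn [na [bs [hbm [ub fS]]]]]]] := lambda_real s n m.
pose bs2 := bs ++ nseq (m - size bs) [::].
have hbd2 : block_decomp S bs2.
  split; first by rewrite all_cat ub /=; elim: (m - size bs).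
  by rewrite flatten_cat fS; elim: (m - size bs) => [|j IH]; rewrite ?cats0.
have hsz : size bs2 = m by rewrite size_cat size_nseq; lia.
exists (n - sumn [seq checkn (intervals bs2 ms) q | q <- iota 0 mhat]).
exists [seq checkn (intervals bs2 ms) q | q <- iota 0 mhat].
split; first by rewrite size_map size_iota.
split; first exact: (nhatE hs hn hsz hbd2 hmh hms hsum).
rewrite -hL; exact: (main1 hs hn hsz hbd2 na hmh hms hsum).
Qed.
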